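(* Let $Y=g(X+\delta)+\epsilon$, where $X,\delta,\epsilon$ are independent random variables, $X$ has a density with respect to Lebesgue measure, $\delta$ has a density with respect to a $\sigma$-finite Borel measure $\mu$, and $\epsilon$ has a density with respect to Lebesgue measure. Let $p\in(0,1)$ and $y_0$ with $\mathbb{P}(Y\le y_0)=p$. If $g$ is non-decreasing, then an optimal predictor of $\mathbb{I}(Y>y_0)$ can be written in the form $\mathbb{I}(X>x_0)$ for some constant $x_0$ that calibrates the predictor.
   Context: A predictor of $\mathbb{I}(Y>y_0)$ is an indicator $\mathbb{I}(h(X)>\tau)$ with $h$ Borel; it is calibrated at level $q$ if $\mathbb{P}(h(X)>\tau)=1-q$, and optimal (at level $q$) if its precision $\mathbb{P}(Y>y_0\mid h(X)>\tau)$ is at least that of every other predictor calibrated at level $q$. *)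

(* Defs.v *)
From HB Require Import structures.
From mathcomp Require Import all_boot all_order all_algebra.
From mathcomp Require Import all_classical all_reals all_analysis.
Set Implicit Arguments. Unset Strict Implicit. Unset Printing Implicit Defensive.
Import Order.TTheory GRing.Theory Num.Theory.
Local Open Scope classical_set_scope.
Local Open Scope ring_scope.

Section Defs.
Context {d : measure_display} {Omega : measurableType d} {R : realType}.
Variable P : probability Omega R.

Definition indep3 (X Z W : Omega -> R) : Prop :=
  forall A B C : set R, measurable A -> measurable B -> measurable C ->
    P (X @^-1` A `&` Z @^-1` B `&` W @^-1` C) =
    (P (X @^-1` A) * P (Z @^-1` B) * P (W @^-1` C))%E.

Definition has_density_wrt (mu : {measure set (measurableTypeR R) -> \bar R})
  (X : Omega -> R) : Prop :=
  exists f : R -> R, measurable_fun setT f /\ (forall x, 0 <= f x) /\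
    forall A : set R, measurable A ->
      P (X @^-1` A) = (\int[mu]_(x in A) (f x)%:E)%E.

(* the predictor I(h(X) > tau) is calibrated at level q *)
Definition calibrated (X : Omega -> R) (q : R) (h : R -> R) (tau : R) : Prop :=
  P [set w | tau < h (X w)] = (1 - q)%:E.

Definition precision (X Y : Omega -> R) (y0 : R) (h : R -> R) (tau : R) : R :=
  fine (P [set w | y0 < Y w /\ tau < h (X w)]) / fine (P [set w | tau < h (X w)]).

Definition optimal (X Y : Omega -> R) (y0 q : R) (h : R -> R) (tau : R) : Prop :=
  calibrated X q h tau /\
  forall (h' : R -> R) (tau' : R), measurable_fun setT h' ->
    calibrated X q h' tau' -> precision X Y y0 h' tau' <= precision X Y y0 h tau.

End Defs.

(* Main.v *)
Require Import Defs.
From HB Require Import structures.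
From mathcomp Require Import all_boot all_order all_algebra.
From mathcomp Require Import all_classical all_reals all_analysis.
From mathcomp Require Import measurable_realfun.
Import Order.TTheory GRing.Theory Num.Theory.
Local Open Scope classical_set_scope.
Local Open Scope ring_scope.

Section helpers.
Context (d : measure_display) (T : measurableType d) (R : realType).

Lemma mT_pre (f : T -> R) (B : set R) : measurable_fun setT f -> measurable B ->
  measurable (f @^-1` B).
Proof. by move=> mf mB; rewrite -[_ @^-1` _]setTI; exact: mf. Qed.

Lemma m_gt (f : T -> R) a : measurable_fun setT f -> measurable [set w | a < f w].
Proof. by move=> mf; rewrite -preimage_itvoy; apply: mT_pre => //; exact: measurable_itv. Qed.

Lemma m_le (f : T -> R) a : measurable_fun setT f -> measurable [set w | f w <= a].
Proof. by move=> mf; rewrite -preimage_itvNyc; apply: mT_pre => //; exact: measurable_itv. Qed.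

Lemma m_lt (f : T -> R) a : measurable_fun setT f -> measurable [set w | f w < a].
Proof. by move=> mf; rewrite -preimage_itvNyo; apply: mT_pre => //; exact: measurable_itv. Qed.

Lemma m_eq (f : T -> R) a : measurable_fun setT f -> measurable [set w | f w = a].
Proof. by move=> mf; exact: (@mT_pre f [set a] mf (measurable_set1 a)). Qed.

End helpers.

Lemma lim_geE (R : realType) (u : nat -> \bar R) l x :
  u @ \oo --> l -> (forall n, (x <= u n)%E) -> (x <= l)%E.
Proof.
move=> ul ux; rewrite -(cvg_lim _ ul) //; apply: lime_ge; first exact: (cvgP _ ul).
exact: nearW.
Qed.

Arguments lim_geE {R u l x}.

Lemma lim_leE (R : realType) (u : nat -> \bar R) l x :
  u @ \oo --> l -> (forall n, (u n <= x)%E) -> (l <= x)%E.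
Proof.
move=> ul ux; rewrite -(cvg_lim _ ul) //; apply: lime_le; first exact: (cvgP _ ul).
exact: nearW.
Qed.

Arguments lim_leE {R u l x}.

Lemma quantile (d : measure_display) (Omega : measurableType d) (R : realType)
  (P : probability Omega R) (X : Omega -> R) (p : R) :
  measurable_fun setT X -> has_density_wrt P lebesgue_measure X -> 0 < p < 1 ->
  exists x0, P [set w | X w <= x0] = p%:E.
Proof.
move=> mX [f [mf [f0 Hf]]] /andP[p0 p1].
have atom x : P [set w | X w = x] = 0%E.
  rewrite (Hf [set x]) ?measurable_set1 //.
  rewrite null_set_integral //.
    by apply/measurable_EFinP; exact: measurable_funTS.
  exact: lebesgue_measure_set1.
pose F x := P [set w | X w <= x].
have Fmono x y : x <= y -> (F x <= F y)%E.
  move=> xy; apply: le_measure; rewrite ?inE; try exact: m_le.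
  by move=> w /= Xw; apply: le_trans xy.
have Ffin x : (F x < +oo)%E.
  by apply: (le_lt_trans (probability_le1 _ _)); [exact: m_le| exact: ltey].
have [a Fa] : exists a, (F a < p%:E)%E.
  apply: contrapT => /forallNP H.
  have H' n : (p%:E <= F (- n%:R)%R)%E by rewrite leNgt; apply/negP/H.
  pose G n := [set w | X w <= - n%:R].
  have cv : (P \o G) @ \oo --> P (\bigcap_n G n).
    apply: nonincreasing_cvg_mu.
    - exact: (Ffin (- 0%:R)).
    - by move=> n; exact: m_le.
    - by apply: bigcapT_measurable => n; exact: m_le.
    - move=> n m nm; apply/subsetPset => w /=; move/le_trans; apply.
      by rewrite lerN2 ler_nat.
  have G0 : \bigcap_n G n = set0.
    apply/seteqP; split => // w /= Gw.
    have := Gw (Num.Def.trunc (- X w)).+1 I.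
    rewrite /G /= lerNr => /(lt_le_trans (truncnS_gt _)).
    by rewrite ltxx.
  have := lim_geE cv H'; rewrite G0 measure0 lee_fin leNgt p0 //.
have [b Fb] : exists b, (p%:E < F b)%E.
  apply: contrapT => /forallNP H.
  have H' n : (F n%:R <= p%:E)%E by rewrite leNgt; apply/negP/H.
  pose G n := [set w | X w <= n%:R].
  have cv : (P \o G) @ \oo --> P (\bigcup_n G n).
    apply: nondecreasing_cvg_mu.
    - by move=> n; exact: m_le.
    - by apply: bigcupT_measurable => n; exact: m_le.
    - move=> n m nm; apply/subsetPset => w /=; move/le_trans; apply.
      by rewrite ler_nat.
  have G0 : \bigcup_n G n = setT.
    apply/seteqP; split => // w _ /=.
    exists (Num.Def.trunc (X w)).+1 => //.
    by rewrite /G /=; apply/ltW/truncnS_gt.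
  have := lim_leE cv H'; rewrite G0 probability_setT lee_fin leNgt p1 //.
pose S := [set x | (F x <= p%:E)%E].
have hsS : has_sup S.
  split; first by exists a; rewrite /S /= ltW.
  exists b => x Sx; rewrite leNgt; apply/negP => bx.
  have := le_trans (Fmono _ _ (ltW bx)) Sx.
  by rewrite leNgt Fb.
pose x0 := sup S.
exists x0.
have up : (p%:E <= F x0)%E.
  pose G n := [set w | X w <= x0 + n.+1%:R^-1].
  have cv : (P \o G) @ \oo --> P (\bigcap_n G n).
    apply: nonincreasing_cvg_mu.
    - exact: (Ffin (x0 + 0.+1%:R^-1)).
    - by move=> n; exact: m_le.
    - by apply: bigcapT_measurable => n; exact: m_le.
    - move=> n m nm; apply/subsetPset => w /=; move/le_trans; apply.
      by rewrite lerD2l lef_pV2 ?posrE // ler_nat.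
  have G0 : \bigcap_n G n = [set w | X w <= x0].
    apply/seteqP; split => w /= Gw.
      rewrite leNgt; apply/negP => /ltr_add_invr [k Hk].
      by have := Gw k I; rewrite /G /= leNgt Hk.
    move=> n _; rewrite /G /= (le_trans Gw) // lerDl invr_ge0 //.
  rewrite /F -G0; apply: (lim_geE cv) => n /=.
  rewrite leNgt; apply/negP => Hn.
  have : S (x0 + n.+1%:R^-1) by rewrite /S /= ltW.
  move/(sup_upper_bound hsS); rewrite -/x0 leNgt => /negP; apply.
  by rewrite ltrDl invr_gt0.
have lo : (P [set w | (X w < x0)%R] <= p%:E)%E.
  pose G n := [set w | X w <= x0 - n.+1%:R^-1].
  have cv : (P \o G) @ \oo --> P (\bigcup_n G n).
    apply: nondecreasing_cvg_mu.
    - by move=> n; exact: m_le.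
    - by apply: bigcupT_measurable => n; exact: m_le.
    - move=> n m nm; apply/subsetPset => w /=; move/le_trans; apply.
      by rewrite lerD2l lerN2 lef_pV2 ?posrE // ler_nat.
  have G0 : \bigcup_n G n = [set w | X w < x0].
    apply/seteqP; split => w /=.
      move=> [n _]; rewrite /G /= => /le_lt_trans; apply.
      by rewrite ltrBlDr ltrDl invr_gt0.
    move=> /ltr_add_invr [k Hk]; exists k => //; rewrite /G /= lerBrDr ltW //.
  rewrite -G0; apply: (lim_leE cv) => n /=.
  have [e Se He] : exists2 e, S e & x0 - n.+1%:R^-1 < e.
    by apply: sup_adherent => //; rewrite invr_gt0.
  exact: le_trans (Fmono _ _ (ltW He)) Se.
apply/le_anti; rewrite up andbT /F.
have -> : [set w | X w <= x0] = [set w | (X w < x0)%R] `|` [set w | X w = x0].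
  apply/seteqP; split => w /=; first by rewrite le_eqVlt => /orP[/eqP ->|->]; [right|left].
  by move=> [/ltW|->].
rewrite measureU; first by rewrite -[p%:E]adde0; apply: leeD => //; rewrite le_eqVlt; apply/orP; left; apply/eqP; exact: atom.
- exact: m_lt.
- exact: m_eq.
apply/seteqP; split => // w /= [lt0 eq0]; by move: lt0; rewrite eq0 ltxx.
Qed.
Lemma indep_pair (d : measure_display) (Omega : measurableType d) (R : realType) (P : probability Omega R)
  (X D E : Omega -> R) :
  measurable_fun setT X -> measurable_fun setT D -> measurable_fun setT E ->
  indep3 P X D E ->
  forall (C : set R) (S : set (R * R)), measurable C -> measurable S ->
  P (X @^-1` C `&` (fun w => (D w, E w)) @^-1` S) =
  (P (X @^-1` C) * P ((fun w => (D w, E w)) @^-1` S))%E.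
Proof.
move=> mX mD mE ind C S mC mS.
set DE := fun w => (D w, E w).
have mDE : measurable_fun setT DE by exact: measurable_fun_pair.
have mXC : measurable (X @^-1` C) by rewrite -[X @^-1` C]setTI; exact: mX.
have mpre : forall S, measurable S -> measurable (DE @^-1` S).
  by move=> S' mS'; rewrite -[DE @^-1` _]setTI; exact: mDE.
pose m1 := measure_function_pushforward__canonical__measure_function_Measure (mrestr P mXC) mDE.
have r0 : 0 <= fine (P (X @^-1` C)) by apply: fine_ge0; apply: measure_ge0.
pose m2 := mscale (NngNum r0) (measure_function_pushforward__canonical__measure_function_Measure P mDE).
have PXCfin : P (X @^-1` C) \is a fin_num.
  by rewrite ge0_fin_numE ?measure_ge0// (le_lt_trans (probability_le1 _ _)) ?ltey.
have := @measure_unique _ R _ [set A `*` B | A in measurable & B in measurable] (fun _ => setT) _ _ _ _ m1 m2 _ _ S mS.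
rewrite /m1 /m2 /= /mscale /pushforward /mrestr /= fineK // => H; rewrite setIC H //.
- by rewrite measurable_prod_measurableType.
- move=> /= _ _ [X1 mX1 [X2 mX2 <-]] [Y1 mY1 [Y2 mY2 <-]].
  rewrite -setXI; exists (X1 `&` Y1); first exact: measurableI.
  by exists (X2 `&` Y2) => //; exact: measurableI.
- by move=> _; exists setT => //; exists setT => //; rewrite setXTT.
- by rewrite bigcup_const.
- move=> _ [A mA [B mB <-]].
  rewrite /m1 /m2 /= /mscale /pushforward /mrestr /=.
  have -> : DE @^-1` (A `*` B) = D @^-1` A `&` E @^-1` B by [].
  have h1 := ind C A B mC mA mB.
  have h2 := ind setT A B measurableT mA mB.
  rewrite !preimage_setT setTI probability_setT mul1e in h2.
  rewrite -muleA -h2 in h1.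
  have -> : D @^-1` A `&` E @^-1` B `&` X @^-1` C = X @^-1` C `&` D @^-1` A `&` E @^-1` B.
    by rewrite setIC setIA.
  exact: h1.
- move=> _; rewrite /m1 /= /pushforward /mrestr.
  by rewrite (le_lt_trans (probability_le1 _ _)) ?ltey //; apply: measurableI => //; exact: mpre.
Qed.

Section prlemmas.
Context (d : measure_display) (Omega : measurableType d) (R : realType) (P : probability Omega R).

Lemma prE (S : set Omega) : measurable S -> P S = (fine (P S))%:E.
Proof.
move=> mS; rewrite fineK // ge0_fin_numE ?measure_ge0 //.
by apply: (le_lt_trans (probability_le1 _ _)) => //; exact: ltey.
Qed.

Lemma pr_le (S1 S2 : set Omega) : measurable S1 -> measurable S2 -> S1 `<=` S2 ->
  fine (P S1) <= fine (P S2).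
Proof.
move=> m1 m2 s12; rewrite -lee_fin -prE // -prE //.
by apply: le_measure => //; rewrite inE.
Qed.

Lemma pr_DI (A B : set Omega) : measurable A -> measurable B ->
  fine (P A) = fine (P (A `\` B)) + fine (P (A `&` B)).
Proof.
move=> mA mB; apply/EFin_inj; rewrite EFinD -!prE //.
all: try exact: measurableD; try exact: measurableI; exact: measureDI.
Qed.

End prlemmas.

Theorem proposition4 (d : measure_display) (Omega : measurableType d)
  (R : realType) (P : probability Omega R)
  (X delta eps : Omega -> R) (g : R -> R)
  (mu : {measure set (measurableTypeR R) -> \bar R}) (p y0 : R) :
  measurable_fun setT X -> measurable_fun setT delta -> measurable_fun setT eps ->
  indep3 P X delta eps ->
  has_density_wrt P lebesgue_measure X ->
  sigma_finite setT mu ->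
  has_density_wrt P mu delta ->
  has_density_wrt P lebesgue_measure eps ->
  0 < p < 1 ->
  P [set w | g (X w + delta w) + eps w <= y0] = p%:E ->
  {homo g : x y / x <= y} ->
  exists x0 : R,
    optimal P X (fun w => g (X w + delta w) + eps w) y0 p idfun x0.
Proof.
move=> mX mD mE ind dX _ _ _ p01 _ hg.
have [x0 Fx0] := @quantile _ _ _ P X p mX dX p01.
have /andP[p0 p1] := p01.
exists x0.
have mg : measurable_fun setT g by exact: nondecreasing_measurable.
have mY : measurable_fun setT (fun w => g (X w + delta w) + eps w).
  apply: measurable_funD => //; apply: measurableT_comp => //.
  exact: measurable_funD.
have calB : P [set w | x0 < X w] = (1 - p)%:E.
  have -> : [set w | x0 < X w] = ~` [set w | X w <= x0].
    apply/seteqP; split => w /=; first by rewrite ltNge => /negP.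
    by move/negP; rewrite -ltNge.
  by rewrite probability_setC ?Fx0 //; exact: m_le.
split; first exact: calB.
move=> h' tau' mh' cal'.
rewrite /precision /=.
rewrite cal' calB /=.
apply: ler_wpM2r; first by rewrite invr_ge0 subr_ge0 ltW.
pose EY := [set w | y0 < g (X w + delta w) + eps w].
pose A := [set w | tau' < h' (X w)].
pose B := [set w | x0 < X w].
change (fine (P (EY `&` A)) <= fine (P (EY `&` B))).
have mEY : measurable EY by exact: m_gt.
have mA : measurable A by apply: m_gt; exact: measurableT_comp.
have mB : measurable B by exact: m_gt.
pose SZ := [set z : R * R | y0 < g (x0 + z.1) + z.2].
have mSZ : measurable SZ.
  apply: m_gt; apply: measurable_funD => //=.
  apply: measurableT_comp => //; apply: measurable_funD => //.
pose EZ := (fun w => (delta w, eps w)) @^-1` SZ.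
have mEZ : measurable EZ.
  by rewrite /EZ -[_ @^-1` _]setTI; apply: (measurable_fun_pair mD mE).
pose C1 := [set x | tau' < h' x /\ ~ (x0 < x)].
pose C2 := [set x | x0 < x /\ ~ (tau' < h' x)].
have mid : measurable_fun setT (@id R) by exact: measurable_id.
have mC1 : measurable C1.
  exact: (measurableD (@m_gt _ _ _ h' tau' mh') (@m_gt _ _ _ id x0 mid)).
have mC2 : measurable C2.
  exact: (measurableD (@m_gt _ _ _ id x0 mid) (@m_gt _ _ _ h' tau' mh')).
have i1 := @indep_pair _ _ _ P X delta eps mX mD mE ind _ _ mC1 mSZ.
have i2 := @indep_pair _ _ _ P X delta eps mX mD mE ind _ _ mC2 mSZ.
have r1 : fine (P (X @^-1` C1 `&` EZ)) = fine (P (X @^-1` C1)) * fine (P EZ).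
  by rewrite /EZ i1 fineM // ?ge0_fin_numE ?measure_ge0 //;
    apply: (le_lt_trans (probability_le1 _ _)) => //; try exact: ltey; apply: mT_pre.
have r2 : fine (P (X @^-1` C2 `&` EZ)) = fine (P (X @^-1` C2)) * fine (P EZ).
  by rewrite /EZ i2 fineM // ?ge0_fin_numE ?measure_ge0 //;
    apply: (le_lt_trans (probability_le1 _ _)) => //; try exact: ltey; apply: mT_pre.
have AB : fine (P A) = fine (P B) by rewrite /A /B cal' calB.
have dA := @pr_DI _ _ _ P A B mA mB.
have dB := @pr_DI _ _ _ P B A mB mA.
rewrite (setIC B A) in dB.
have eq12 : fine (P (A `\` B)) = fine (P (B `\` A)).
  by apply: (@addIr _ (fine (P (A `&` B)))); rewrite -dA -dB.
have dEA := @pr_DI _ _ _ P (EY `&` A) B (measurableI _ _ mEY mA) mB.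
have dEB := @pr_DI _ _ _ P (EY `&` B) A (measurableI _ _ mEY mB) mA.
have EBA : EY `&` B `&` A = EY `&` A `&` B by rewrite -!setIA (setIC B).
rewrite EBA in dEB.
have eC1 : X @^-1` C1 = A `\` B by [].
have eC2 : X @^-1` C2 = B `\` A by [].
rewrite eC1 in r1; rewrite eC2 in r2.
have mAB : measurable (A `\` B) by exact: measurableD.
have mBA : measurable (B `\` A) by exact: measurableD.
have le1 : fine (P ((EY `&` A) `\` B)) <= fine (P ((A `\` B) `&` EZ)).
  apply: pr_le.
  - by apply: measurableD => //; exact: measurableI.
  - exact: measurableI.
  move=> w [[Yw Aw] nB]; split; first by split.
  rewrite /EZ /SZ /=; apply: lt_le_trans Yw _; rewrite lerD2r; apply: hg.
  by rewrite lerD2r leNgt; apply/negP.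
have le2 : fine (P ((B `\` A) `&` EZ)) <= fine (P ((EY `&` B) `\` A)).
  apply: pr_le.
  - exact: measurableI.
  - by apply: measurableD => //; exact: measurableI.
  move=> w [[Bw nA] Zw]; split => //; split => //.
  rewrite /EY /=; apply: lt_le_trans Zw _; rewrite lerD2r; apply: hg.
  by rewrite lerD2r ltW.
rewrite dEA dEB lerD2r; apply: le_trans le1 _.
by rewrite r1 eq12 -r2.
Qed.
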